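(* Let $X,X_1,X_2,\dots$ be i.i.d. real random variables with $EX=0$ and $E|X|^{2+\varepsilon}<\infty$ for some $\varepsilon>0$. Let $\mu>0$, $m\ge1$, $\delta\in(0,1/2]$ and $\alpha$ satisfy $2<\alpha\le(2+\varepsilon)(1-\delta)$, and assume $$\frac{6\cdot 2^{\alpha}}{(\alpha-1)(m+1)^{\alpha-1}\mu}\,E\big[(X^+)^{2+\varepsilon}\big]\le1.$$ Let $n_k=2^{k-1}$, $\bar G(t)=\int_t^\infty(1+s)^{-\alpha}ds$, $g(k)=\big(\bar G(m+\mu n_{k-1})-\bar G(m+\mu n_k)\big)/\bar G(m+\mu n_1)$ for $k\ge2$, and $$B_k=\bigcap_{j=1}^{n_k-1}\{X_j\le(\mu n_{k-1}+m)^{1-\delta}\}.$$ Then $$\frac{3P(B_k^c)}{g(k)}\le1\qquad\text{for all }k\ge2.$$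
   Context: $X^+=\max(X,0)$; $B_k^c$ is the complement of $B_k$. *)

(* Defs.v *)
From HB Require Import structures.
From mathcomp Require Import all_boot all_order all_algebra.
From mathcomp Require Import all_classical all_reals all_analysis.
Set Implicit Arguments. Unset Strict Implicit. Unset Printing Implicit Defensive.
Import Order.TTheory GRing.Theory Num.Theory.
Local Open Scope classical_set_scope.
Local Open Scope ring_scope.

Definition mutually_independent d (T : measurableType d) (R : realType)
  (P : probability T R) (X : nat -> {RV P >-> R}) : Prop :=
  forall (s : seq nat) (A : nat -> set R), uniq s ->
    (forall i, measurable (A i)) ->
    P (\bigcap_(i in [set i | i \in s]) (X i @^-1` A i))
    = (\prod_(i <- s) P (X i @^-1` A i))%E.

Definition identically_distributed d (T : measurableType d) (R : realType)
  (P : probability T R) (X : nat -> {RV P >-> R}) : Prop :=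
  forall i (A : set R), measurable A -> P (X i @^-1` A) = P (X 0%N @^-1` A).

Definition iid d (T : measurableType d) (R : realType)
  (P : probability T R) (X : nat -> {RV P >-> R}) : Prop :=
  mutually_independent X /\ identically_distributed X.

Definition nk (k : nat) : nat := (2 ^ k.-1)%N.

Definition Gbar (R : realType) (alpha t : R) : R :=
  Rintegral (@lebesgue_measure R) `[t, +oo[%classic
    (fun s => (1 + s) `^ (- alpha)).

Definition gfun (R : realType) (alpha m mu : R) (k : nat) : R :=
  (Gbar alpha (m + mu * (nk k.-1)%:R) - Gbar alpha (m + mu * (nk k)%:R))
  / Gbar alpha (m + mu * (nk 1)%:R).

Definition Bk d (T : measurableType d) (R : realType) (P : probability T R)
  (X : nat -> {RV P >-> R}) (mu m delta : R) (k : nat) : set T :=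
  \bigcap_(j in [set j | (1 <= j <= (nk k).-1)%N])
    [set t | X j t <= (mu * (nk k.-1)%:R + m) `^ (1 - delta)].

(* Main.v *)
Require Import Defs.
From HB Require Import structures.
From mathcomp Require Import all_boot all_order all_algebra.
From mathcomp Require Import all_classical all_reals all_analysis.
From Stdlib Require Import Lia.
From mathcomp Require Import zify ring lra measurable_realfun.
Import Order.TTheory GRing.Theory Num.Theory.
Local Open Scope classical_set_scope.
Local Open Scope ring_scope.

Section G.
Variable R : realType.

Lemma is_derive_shift (p x : R) : -1 < x ->
  is_derive x 1 (fun s => (1 + s) `^ p) (p * (1 + x) `^ (p - 1)).
Proof.
move=> hx.
have h1 : 0 < 1 + x by lra.
have := @is_derive1_comp R (fun y => y `^ p) (fun s => 1 + s) x _ 1 (@is_derive1_powR R p (1+x) h1) _.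
rewrite mulr1; apply.
have -> : (fun s : R => 1 + s) = (cst 1 + id) by [].
rewrite -[X in is_derive _ _ _ X]add0r; exact: is_deriveD.
Qed.

Lemma cont_shift (p x : R) : -1 < x -> {for x, continuous (fun s : R^o => (1 + s) `^ p)}.
Proof.
move=> hx; have := @is_derive_shift p x hx => -[dv _].
exact/differentiable_continuous/derivable1_diffP.
Qed.

Lemma is_derive_F (alpha x : R) : 1 < alpha -> -1 < x ->
  is_derive x 1 (fun s : R => - ((1 + s) `^ (1 - alpha) / (alpha - 1)))
    ((1 + x) `^ (- alpha)).
Proof.
move=> ha hx.
have := is_deriveZ (- (alpha - 1)^-1) (@is_derive_shift (1 - alpha) x hx).
have -> : (- (alpha - 1)^-1) \*: (fun s : R => (1 + s) `^ (1 - alpha)) =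
  (fun s : R => - ((1 + s) `^ (1 - alpha) / (alpha - 1))).
  by apply/funext => s /=; rewrite scaleNr [_ *: _]mulrC.
move/is_derive_eq; apply.
have -> : 1 - alpha - 1 = - alpha by lra.
have hb : alpha - 1 != 0 by apply/eqP; lra.
by rewrite scaleNr [_ *: _]mulrA -mulNr -mulrN opprB mulVf // mul1r.
Qed.

Lemma cvg_F (alpha : R) : 2 <= alpha ->
  (fun s : R => - ((1 + s) `^ (1 - alpha) / (alpha - 1))) x @[x --> +oo] --> 0.
Proof.
move=> ha.
rewrite -oppr0; apply: cvgN.
rewrite -(mul0r (alpha - 1)^-1); apply: cvgMl.
apply/cvgr0Pnorm_lt => e e0.
near=> x.
have hx : e^-1 < x by near: x; apply: nbhs_pinfty_gt; rewrite num_real.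
have ie : 0 < e^-1 by rewrite invr_gt0.
have x0 : 0 < x by lra.
rewrite ger0_norm ?powR_ge0 //.
apply: (@le_lt_trans _ _ ((1 + x) `^ (-1))).
  by apply: ler_powR; lra.
rewrite powR_inv1; last lra.
rewrite -(invrK e) ltf_pV2 ?posrE. all: lra.
Unshelve. all: by end_near. Qed.

Lemma Gbar_val (alpha t : R) : 2 <= alpha -> 0 <= t ->
  Gbar alpha t = (1 + t) `^ (1 - alpha) / (alpha - 1).
Proof.
move=> ha ht.
have hb : 0 < alpha - 1 by lra.
pose F := fun s : R => - ((1 + s) `^ (1 - alpha) / (alpha - 1)).
rewrite /Gbar (@Rintegral_ge0_continuous_FTC2y R _ F t 0).
- by rewrite /F sub0r opprK.
- by move=> x _; exact: powR_ge0.
- have ct : forall x : R, t <= x -> {for x, continuous (fun s : R^o => (1 + s) `^ (- alpha))}.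
    move=> x hx; apply: cont_shift; lra.
  apply/continuous_within_itvcyP; split.
    move=> x; rewrite in_itv /= andbT => hx; apply: ct; lra.
  by apply: cvg_at_right_filter; apply: ct.
- exact: cvg_F.
- move=> x hx; have [dv _] := @is_derive_F alpha x ltac:(lra) ltac:(lra); exact: dv.
- apply: (@cvg_at_right_filter R R^o F t).
  have [dv _] := @is_derive_F alpha t ltac:(lra) ltac:(lra).
  exact/differentiable_continuous/derivable1_diffP.
- move=> x; rewrite in_itv /= andbT => hx.
  have [_ <-] := @is_derive_F alpha x ltac:(lra) ltac:(lra).
  by rewrite derive1E.
Qed.
End G.

Section M.
Variable R : realType.

Lemma powRE (x p : R) : 0 < x -> x `^ p = expR (p * ln x).
Proof. by move=> x0; rewrite /powR gt_eqF. Qed.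

Lemma mvt_pow (x y b : R) : 0 < x -> x <= y -> 0 <= b ->
  b * (y - x) * y `^ (- b - 1) <= x `^ (- b) - y `^ (- b).
Proof.
move=> x0 xy b0.
have y0 : 0 < y by lra.
rewrite !powRE //.
set u := ln x; set v := ln y.
have uv : u <= v by rewrite /u /v ler_ln // posrE.
have ex : expR u = x by rewrite /u lnK // posrE.
have ey : expR v = y by rewrite /v lnK // posrE.
have h1 : expR (- b * u) = expR (- b * v) * expR (b * (v - u)).
  by rewrite -expRD; congr expR; ring.
have h2 : 1 + b * (v - u) <= expR (b * (v - u)) by exact: expR_ge1Dx.
have h3 : 1 + (u - v) <= expR (u - v) by exact: expR_ge1Dx.
have h4 : expR (u - v) = x / y by rewrite expRB ex ey.
have h5 : expR ((- b - 1) * v) = expR (- b * v) / y.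
  by rewrite -ey -expRN -expRD; congr expR; ring.
rewrite h1 h5.
set E := expR (- b * v).
have E0 : 0 < E by exact: expR_gt0.
have h6 : 1 - x / y <= v - u by lra.
have h7 : (y - x) / y = 1 - x / y by rewrite mulrBl divff // gt_eqF.
have h8 : b * (1 - x/y) <= b * (v - u) by apply: ler_wpM2l.
have : E * (b * (1 - x / y)) <= E * (b * (v - u)) by apply: ler_wpM2l => //; exact: ltW.
rewrite -h7.
have -> : b * (y - x) * (E / y) = E * (b * ((y - x) / y)) by rewrite mulrA; ring.
nra.
Qed.
End M.

Section Pr.
Variables (d : measure_display) (T : measurableType d) (R : realType)
  (P : probability T R).

Lemma fin_P (A : set T) : measurable A -> P A \is a fin_num.
Proof.
move=> mA; rewrite ge0_fin_numE //; apply: (le_lt_trans (probability_le1 P mA)).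
exact: ltey.
Qed.

Lemma markov_pos (Y : {RV P >-> R}) (c p : R) : 0 < c -> 0 <= p ->
  ((c `^ p)%:E * P (Y @^-1` `]c, +oo[) <=
   \int[P]_x ((Num.max (Y x) 0) `^ p)%:E)%E.
Proof.
move=> c0 p0.
have mF : measurable (Y @^-1` `]c, +oo[) by exact: measurable_funPTI.
have mg0 : measurable_fun setT (fun x => (Num.max (Y x) 0) `^ p).
  apply: (measurableT_comp (measurable_powR _)).
  exact: (measurable_maxr (measurable_funP _) (measurable_cst _)).
have mg : measurable_fun setT (fun x : T => (((Num.max (Y x) 0) `^ p)%:E : \bar R)).
  exact/measurable_EFinP.
apply: (@le_trans _ _ (\int[P]_(x in Y @^-1` `]c, +oo[) ((Num.max (Y x) 0) `^ p)%:E)%E); last first.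
  apply: ge0_subset_integral => //.
  by move=> x _; rewrite lee_fin powR_ge0.
rewrite -integral_cst //.
apply: ge0_le_integral => //.
- by move=> x _; rewrite lee_fin powR_ge0.
- exact: measurable_funS mg.
- move=> x; rewrite /= in_itv /= andbT => hx.
  rewrite lee_fin.
  have -> : Num.max (Y x) 0 = Y x by apply/max_idPl; lra.
  apply: ge0_ler_powR => //; rewrite ?nnegrE; lra.
Qed.

Lemma union_bound (X : nat -> {RV P >-> R}) (mu m delta : R) (k : nat) :
  identically_distributed X ->
  (P (~` Bk X mu m delta k) <= ((nk k)%:R)%:E *
     P (X 0%N @^-1` `]((mu * (nk k.-1)%:R + m) `^ (1 - delta))%R, +oo[))%E.
Proof.
move=> hid.
set c := (mu * (nk k.-1)%:R + m) `^ (1 - delta).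
pose F j := X j @^-1` `]c, +oo[.
have mF j : measurable (F j) by exact: measurable_funPTI.
have mB : measurable (~` Bk X mu m delta k).
  apply: measurableC; apply: bigcap_measurableType => j _.
  have -> : [set t | X j t <= c] = X j @^-1` `]-oo, c] .
    by apply/seteqP; split => t /=; rewrite in_itv.
  exact: measurable_funPTI.
apply: (@le_trans _ _ (\sum_(j < nk k) P (F j))%E).
  apply: (@content_subadditive _ _ _ P) => //.
  rewrite /Bk setC_bigcap -bigcup_mkord => t [j /= /andP[j1 jn] hj].
  exists j.
    rewrite /=; have : (0 < nk k)%N by rewrite /nk expn_gt0.
    move: jn; case: (nk k) => // n; rewrite /= => jn _; lia.
  by rewrite /F /= in_itv /= andbT ltNge; apply/negP.
rewrite (eq_bigr (fun=> P (F 0%N))); last by move=> j _; apply: hid.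
rewrite -(fineK (@fin_P _ (mF 0%N))) sumEFin big_const_ord iter_addr addr0 -EFinM.
by rewrite mulr_natl.
Qed.
End Pr.

Lemma final_ineq (R : realType) (r q e A Z Y W Tp Two M b mu n : R) :
  0 <= r -> 0 <= q -> 0 <= e -> 0 < Z -> 0 < Y -> 0 < W -> 0 < Two ->
  0 < M -> 0 < b -> 0 < mu -> 0 < n ->
  b * mu * n <= A * Y -> Y <= Two * W -> M <= Z -> q * W <= e ->
  r <= 2 * n * q -> 6 * Two * e <= b * M * mu ->
  3 * r <= A * Z.
Proof.
move=> r0 q0 e0 Z0 Y0 W0 T0 M0 b0 mu0 n0 F1 F2 F3 F5 F6 F7.
have TW0 : 0 < Two * W by exact: mulr_gt0.
rewrite -(ler_pM2r TW0).
have s1 : 3 * r * (Two * W) <= 6 * n * Two * (q * W).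
  have := ler_wpM2r (ltW TW0) F6. move=> h; nra.
have s2 : 6 * n * Two * (q * W) <= n * (6 * Two * e).
  have h : 0 <= 6 * n * Two by nra.
  have := ler_wpM2l h F5; nra.
have s3 : n * (6 * Two * e) <= n * (b * M * mu) by apply: ler_wpM2l; lra.
have s4 : n * (b * M * mu) <= (b * mu * n) * Z.
  have h : 0 <= b * mu * n by nra.
  have := ler_wpM2l h F3; nra.
have s5 : (b * mu * n) * Z <= (A * Y) * Z by apply: ler_wpM2r => //; exact: ltW.
have A0 : 0 <= A.
  have : 0 < b * mu * n by rewrite !mulr_gt0.
  move=> h; have : 0 < A * Y by exact: lt_le_trans h F1.
  by rewrite pmulr_lgt0 // => /ltW.
have s6 : (A * Y) * Z <= (A * Z) * (Two * W).
  have h : 0 <= A * Z by nra.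
  have := ler_wpM2l h F2; nra.
lra.
Qed.

Lemma Bk_meas d (T : measurableType d) (R : realType) (P : probability T R)
  (X : nat -> {RV P >-> R}) (mu m delta : R) (k : nat) :
  measurable (~` Bk X mu m delta k).
Proof.
apply: measurableC; apply: bigcap_measurableType => j _.
have -> : [set t | X j t <= (mu * (nk k.-1)%:R + m) `^ (1 - delta)] =
  X j @^-1` `]-oo, (mu * (nk k.-1)%:R + m) `^ (1 - delta)] .
  by apply/seteqP; split => t /=; rewrite in_itv.
exact: measurable_funPTI.
Qed.

Theorem lemma3 (d : measure_display) (T : measurableType d) (R : realType)
  (P : probability T R) (X : nat -> {RV P >-> R})
  (eps mu m delta alpha : R) :
  iid X ->
  ('E_P[X 0%N] = 0)%E ->
  0 < eps ->
  (\int[P]_x ((`|X 0%N x|) `^ (2 + eps))%:E < +oo)%E ->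
  0 < mu -> 1 <= m -> 0 < delta -> delta <= 2^-1 ->
  2 < alpha -> alpha <= (2 + eps) * (1 - delta) ->
  ((6 * 2 `^ alpha / ((alpha - 1) * (m + 1) `^ (alpha - 1) * mu))%:E
     * \int[P]_x ((Num.max (X 0%N x) 0) `^ (2 + eps))%:E <= 1)%E ->
  forall k : nat, (2 <= k)%N ->
    3 * fine (P (~` Bk X mu m delta k)) / gfun alpha m mu k <= 1.
Proof.
move=> [_ hid] _ eps0 _ mu0 m1 d0 dh a2 aeps hK k k2.
have [k' kE] : exists k', k = k'.+2 by exists k.-2; lia.
subst k.
set n := (nk k'.+1)%:R : R.
have nkE : (nk k'.+2)%:R = 2 * n :> R by rewrite /n /nk /= expnS natrM.
have n1 : 1 <= n by rewrite /n /nk ler1n expn_gt0.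
set w := mu * n + m.
have w1 : 1 <= w by rewrite /w; nra.
set th := w `^ (1 - delta).
have th0 : 0 < th by rewrite /th powR_gt0 //; lra.
set F0 := X 0%N @^-1` `]th, +oo[.
have mF0 : measurable F0 by exact: measurable_funPTI.
set q := fine (P F0).
have PF0 : P F0 = q%:E by rewrite /q fineK // fin_P.
have q0 : 0 <= q by rewrite /q fine_ge0 // measure_ge0.
set r := fine (P (~` Bk X mu m delta k'.+2)).
have PB : P (~` Bk X mu m delta k'.+2) = r%:E by rewrite /r fineK // fin_P //; exact: Bk_meas.
have r0 : 0 <= r by rewrite /r fine_ge0 // measure_ge0.
have hU := @union_bound _ _ _ P X mu m delta k'.+2 hid.
rewrite PB -/th -/F0 PF0 nkE -EFinM lee_fin in hU.
have hMk := @markov_pos _ _ _ P (X 0%N) th (2 + eps) th0 ltac:(lra).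
rewrite -/F0 PF0 in hMk.
set E := (\int[P]_x ((Num.max (X 0%N x) 0) `^ (2 + eps))%:E)%E in hK hMk.
have E0 : (0 <= E)%E by apply: integral_ge0 => x _; rewrite lee_fin powR_ge0.
have b0 : 0 < alpha - 1 by lra.
have M0 : 0 < (m + 1) `^ (alpha - 1) by rewrite powR_gt0 //; lra.
have T0 : 0 < 2 `^ alpha by rewrite powR_gt0.
have K0 : 0 < 6 * 2 `^ alpha / ((alpha - 1) * (m + 1) `^ (alpha - 1) * mu).
  by rewrite divr_gt0 // ?mulr_gt0.
have [e Ee] : exists e, E = e%:E.
  clear hMk; move: hK E0; case: E => [e _ _| hK' _ | //]; first by exists e.
  by move: hK'; rewrite mulry gtr0_sg // mul1e leNgt ltry.
rewrite Ee in hK hMk E0; rewrite lee_fin in E0.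
rewrite -EFinM lee_fin in hMk; rewrite -EFinM lee_fin in hK.
have F7 : 6 * 2 `^ alpha * e <= (alpha - 1) * (m + 1) `^ (alpha - 1) * mu.
  move: hK; rewrite mulrAC ler_pdivrMr ?mul1r // !mulr_gt0 //.
have nk1 : (nk 1)%:R = 1 :> R by [].
rewrite /gfun /= -/n nkE nk1 mulr1.
have n0 : 0 < n by lra.
rewrite !Gbar_val; try (by lra); try (by nra).
set x := 1 + (m + mu * n).
set y := 1 + (m + mu * (2 * n)).
set z := 1 + (m + mu).
have x0 : 0 < x by rewrite /x; nra.
have xy : x <= y by rewrite /x /y; nra.
have y0 : 0 < y by lra.
have z0 : 0 < z by rewrite /z; lra.
have ab : 1 - alpha = - (alpha - 1) by ring.
set A := x `^ (1 - alpha) - y `^ (1 - alpha).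
set Z := z `^ (alpha - 1).
have Z0 : 0 < Z by rewrite powR_gt0.
have zE : z `^ (1 - alpha) = Z^-1 by rewrite ab powRN.
have gE : (x `^ (1 - alpha) / (alpha - 1) - y `^ (1 - alpha) / (alpha - 1)) /
   (z `^ (1 - alpha) / (alpha - 1)) = A * Z.
  rewrite zE /A; field; apply/andP; split; apply/eqP; lra.
rewrite gE.
set Y := y `^ alpha.
have Y0 : 0 < Y by rewrite powR_gt0.
set W := w `^ alpha.
have W0 : 0 < W by rewrite powR_gt0 //; lra.
have F1 : (alpha - 1) * mu * n <= A * Y.
  have := @mvt_pow R x y (alpha - 1) x0 xy (ltW b0).
  rewrite (_ : - (alpha - 1) - 1 = - alpha); last by ring.
  rewrite (powRN y alpha) -/Y -ab -/A.

  rewrite (_ : y - x = mu * n); last by rewrite /x /y; ring.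
  by move=> h; rewrite -ler_pdivrMr // -(mulrA (alpha - 1)).
have F2 : Y <= 2 `^ alpha * W.
  rewrite /Y /W -powRM //; last lra.
  apply: ge0_ler_powR; rewrite ?nnegrE; try lra.
  by rewrite /y /w; nra.
have F3 : (m + 1) `^ (alpha - 1) <= Z.
  apply: ge0_ler_powR; rewrite ?nnegrE; try lra.
  by rewrite /z; lra.
have F4 : W <= th `^ (2 + eps).
  rewrite /th -powRrM /W; apply: ler_powR => //.
  by rewrite mulrC.
have F5 : q * W <= e.
  apply: le_trans hMk; rewrite mulrC; exact: ler_wpM2r.
have hf := @final_ineq R r q e A Z Y W (th `^ (2 + eps)) (2 `^ alpha)
  ((m + 1) `^ (alpha - 1)) (alpha - 1) mu n r0 q0 E0 Z0 Y0 W0 T0 M0 b0 mu0 n0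
  F1 F2 F3 F5 hU F7.
have A0 : 0 < A.
  have : 0 < (alpha - 1) * mu * n by rewrite !mulr_gt0.
  move=> h; have : 0 < A * Y by exact: lt_le_trans h F1.
  by rewrite pmulr_lgt0.
by rewrite ler_pdivrMr ?mul1r // mulr_gt0.
Qed.
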